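(* Let $S_A>0$, $\theta\geq0$, $\lambda\geq0$, $B\geq1$ an integer, $V_k\in(0,1]$ and $S_M\geq0$. Let $\rho(\zeta)=\zeta e^{-\zeta}$, $\hat\nu(V,\Lambda)=V/(1+V\Lambda)$, and for $\zeta\in(0,1)$ let $$g(S_M,\zeta,V_k)=\sum_{r=0}^{B}\binom{B}{r}\rho(\zeta)^r(1-\rho(\zeta))^{B-r}\,\hat\nu\left(V_k,\frac{rS_AS_M}{S_A+S_M}\right)\frac{r-\rho(\zeta)B}{\rho(\zeta)(1-\rho(\zeta))}+\lambda B\frac{e^{\zeta}}{1-\zeta}(1+\theta S_M).$$ Then $\zeta\mapsto g(S_M,\zeta,V_k)$ is an increasing function of $\zeta\in(0,1)$.
   Context: In the decentralized myopic sensing policy (large-network limit, $B$ collision channels), $g$ is, up to the positive factor $e^{\zeta}/(1-\zeta)$, the derivative with respect to the normalized activation probability $\zeta$ of the one-slot cost $\sum_r\mathcal B_B(r;\rho(\zeta))\hat\nu(V_k,rS_AS_M/(S_A+S_M))+\lambda\zeta B(1+\theta S_M)$; here $V_k$ is the prior variance, $S_A$ the ambient SNR, $S_M$ the local measurement SNR. *)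

(* Defs.v *)
From Stdlib Require Import Reals.
Open Scope R_scope.

Definition rho (z : R) : R := z * exp (- z).

Definition nu_hat (V L : R) : R := V / (1 + V * L).

(* g(S_M, zeta, V_k), with the remaining parameters S_A, theta, lambda, B explicit.
   sum_f_R0 f B = f 0 + ... + f B ;  Binomial.C B r is the real binomial coefficient. *)
Definition g (SA theta lambda : R) (B : nat) (SM z Vk : R) : R :=
  sum_f_R0 (fun r : nat =>
      C B r * rho z ^ r * (1 - rho z) ^ (B - r)
      * nu_hat Vk (INR r * SA * SM / (SA + SM))
      * ((INR r - rho z * INR B) / (rho z * (1 - rho z)))) B
  + lambda * INR B * (exp z / (1 - z)) * (1 + theta * SM).

(* Main.v *)
Require Import Defs.
From Stdlib Require Import Reals Lra Lia Psatz.
Open Scope R_scope.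

Lemma C_nn n : C n n = 1.
Proof. unfold C; rewrite Nat.sub_diag; simpl (Factorial.fact 0).
  pose proof (INR_fact_neq_0 n). simpl INR. field; auto. Qed.

Lemma C_ge0 n r : 0 <= C n r.
Proof. unfold C. pose proof (INR_fact_lt_0 n). pose proof (INR_fact_lt_0 r).
  pose proof (INR_fact_lt_0 (n - r)). apply Rlt_le. apply Rdiv_lt_0_compat; auto.
  apply Rmult_lt_0_compat; auto. Qed.

Lemma C_0 n : C n 0 = 1.
Proof. unfold C; rewrite Nat.sub_0_r; simpl. pose proof (INR_fact_neq_0 n). field; auto. Qed.

Lemma pascal_split (h : nat -> R) n :
  sum_f_R0 (fun r => C (S n) r * h r) (S n) =
  sum_f_R0 (fun r => C n r * h r) n + sum_f_R0 (fun r => C n r * h (S r)) n.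
Proof.
  destruct n as [|m].
  - simpl. rewrite !C_nn. unfold C. simpl. field.
  - rewrite (decomp_sum _ (S (S m))) by lia. simpl pred.
    rewrite tech5.
    rewrite (decomp_sum (fun r => C (S m) r * h r) (S m)) by lia. simpl pred.
    rewrite (tech5 (fun r => C (S m) r * h (S r))).
    rewrite C_nn.
    assert (E : sum_f_R0 (fun i => C (S (S m)) (S i) * h (S i)) m =
      sum_f_R0 (fun i => C (S m) i * h (S i)) m + sum_f_R0 (fun i => C (S m) (S i) * h (S i)) m).
    { rewrite <- plus_sum. apply sum_eq. intros i Hi. rewrite <- pascal by lia. ring. }
    rewrite E. rewrite !C_0, C_nn. ring.
Qed.

Lemma sum_lin2 (a b : R) (X Y : nat -> R) n :
  sum_f_R0 (fun i => a * X i + b * Y i) n = a * sum_f_R0 X n + b * sum_f_R0 Y n.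
Proof. induction n; simpl; [ring | rewrite IHn; ring]. Qed.

Lemma sum_scal_r (X : nat -> R) n x :
  sum_f_R0 (fun i => X i * x) n = sum_f_R0 X n * x.
Proof. induction n; simpl; [ring | rewrite IHn; ring]. Qed.

Definition wt n p r := C n r * (p ^ r * (1 - p) ^ (n - r)).
Definition W n (a : nat -> R) p := sum_f_R0 (fun r => wt n p r * a r) n.
Definition D n (f : nat -> R) p :=
  sum_f_R0 (fun r => wt n p r * (f r * (INR r - p * INR n))) n.

Lemma W_rec n a p : W (S n) a p = (1 - p) * W n a p + p * W n (fun r => a (S r)) p.
Proof.
  unfold W.
  rewrite (sum_eq _ (fun r => C (S n) r * (p ^ r * (1 - p) ^ (S n - r) * a r)))
    by (intros; unfold wt; ring).
  rewrite pascal_split. rewrite <- sum_lin2.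
  rewrite <- plus_sum. apply sum_eq. intros i Hi. unfold wt.
  rewrite Nat.sub_succ_l by lia. simpl pow. replace (S n - S i)%nat with (n - i)%nat by lia.
  ring.
Qed.

Lemma D_rec m f p :
  D (S m) f p = (1 - p) * D m f p + p * D m (fun r => f (S r)) p
     + (p * (1 - p)) * W m (fun r => f (S r) - f r) p.
Proof.
  unfold D at 1.
  rewrite (sum_eq _ (fun r => C (S m) r * (p ^ r * (1 - p) ^ (S m - r) *
       (f r * (INR r - p * INR (S m))))))
    by (intros; unfold wt; ring).
  rewrite pascal_split.
  rewrite (sum_eq _ (fun i => (1 - p) * (wt m p i * (f i * (INR i - p * INR m)))
                              + (- (p * (1 - p))) * (wt m p i * f i))).
  2:{ intros i Hi. unfold wt. rewrite Nat.sub_succ_l by lia. rewrite S_INR. simpl pow. ring. }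
  rewrite (sum_eq (fun r => C m r * _) (fun i => p * (wt m p i * (f (S i) * (INR i - p * INR m)))
                              + (p * (1 - p)) * (wt m p i * f (S i)))).
  2:{ intros i Hi. unfold wt. replace (S m - S i)%nat with (m - i)%nat by lia.
      rewrite !S_INR. simpl pow. ring. }
  rewrite !sum_lin2. unfold D, W.
  rewrite (sum_eq (fun r => wt m p r * (f (S r) - f r))
     (fun r => 1 * (wt m p r * f (S r)) + (-1) * (wt m p r * f r)))
    by (intros; ring).
  rewrite sum_lin2. ring.
Qed.

Lemma D_closed n : forall f p, D n f p = p * (1 - p) * INR n * W (pred n) (fun r => f (S r) - f r) p.
Proof.
  induction n as [|m IH]; intros f p.
  - unfold D. simpl. ring.
  - rewrite D_rec, !IH. simpl pred.
    destruct m as [|k].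
    + simpl. ring.
    + simpl pred. rewrite (W_rec k (fun r => f (S r) - f r)).
      rewrite (S_INR (S k)). ring.
Qed.

Lemma W_le n a b p : (forall r, a r <= b r) -> 0 <= p <= 1 -> W n a p <= W n b p.
Proof.
  intros H Hp. unfold W. apply sum_Rle. intros i _. apply Rmult_le_compat_l; auto.
  unfold wt. apply Rmult_le_pos; [apply C_ge0|]. apply Rmult_le_pos; apply pow_le; lra.
Qed.

Lemma W_mono n : forall a, (forall r, a r <= a (S r)) ->
  forall p q, 0 <= p -> p <= q -> q <= 1 -> W n a p <= W n a q.
Proof.
  induction n as [|n IH]; intros a Ha p q H1 H2 H3.
  - unfold W. simpl. apply Rle_refl.
  - rewrite !W_rec.
    assert (A1 := IH a Ha p q H1 H2 H3).
    assert (A2 := IH (fun r => a (S r)) (fun r => Ha (S r)) p q H1 H2 H3).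
    assert (A3 : W n a p <= W n (fun r => a (S r)) p) by (apply W_le; auto; lra).
    nra.
Qed.

Lemma conv V L d : 0 < V -> 0 <= L -> 0 <= d ->
  V / (1 + V * (L + d)) - V / (1 + V * L) <= V / (1 + V * (L + d + d)) - V / (1 + V * (L + d)).
Proof.
  intros HV HL Hd.
  assert (0 <= V * L) by nra. assert (0 <= V * d) by nra.
  assert (E : V / (1 + V * (L + d + d)) - V / (1 + V * (L + d)) -
             (V / (1 + V * (L + d)) - V / (1 + V * L)) =
             2 * V * (V * d) ^ 2 / ((1 + V * L) * (1 + V * (L + d)) * (1 + V * (L + d + d)))).
  { field. repeat split; nra. }
  assert (0 <= 2 * V * (V * d) ^ 2 / ((1 + V * L) * (1 + V * (L + d)) * (1 + V * (L + d + d)))).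
  { apply Rmult_le_pos. apply Rmult_le_pos; [lra|apply pow_le; nra].
    apply Rlt_le, Rinv_0_lt_compat. repeat apply Rmult_lt_0_compat; nra. }
  lra.
Qed.

Definition nuf SA SM Vk r := nu_hat Vk (INR r * SA * SM / (SA + SM)).

Lemma nuf_conv SA SM Vk : 0 < SA -> 0 <= SM -> 0 < Vk -> forall r,
  nuf SA SM Vk (S r) - nuf SA SM Vk r <= nuf SA SM Vk (S (S r)) - nuf SA SM Vk (S r).
Proof.
  intros HA HM HV r. unfold nuf, nu_hat.
  set (c := SA * SM / (SA + SM)).
  assert (Hc : 0 <= c) by (unfold c; apply Rmult_le_pos; [nra| apply Rlt_le, Rinv_0_lt_compat; lra]).
  pose proof (pos_INR r).
  replace (INR r * SA * SM / (SA + SM)) with (INR r * c) by (unfold c; field; lra).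
  replace (INR (S r) * SA * SM / (SA + SM)) with (INR r * c + c) by (unfold c; rewrite S_INR; field; lra).
  replace (INR (S (S r)) * SA * SM / (SA + SM)) with (INR r * c + c + c)
    by (unfold c; rewrite !S_INR; field; lra).
  apply conv; auto. nra.
Qed.

Lemma rho_bounds z : 0 < z < 1 -> 0 < rho z < 1.
Proof.
  intros Hz. unfold rho. pose proof (exp_pos (- z)).
  assert (exp (- z) < 1) by (rewrite <- exp_0; apply exp_increasing; lra). nra.
Qed.

Lemma rho_mono z1 z2 : 0 < z1 -> z1 < z2 -> z2 <= 1 -> rho z1 <= rho z2.
Proof.
  intros H1 H2 H3. unfold rho.
  set (d := z2 - z1).
  assert (Ez : exp (- z1) = exp (- z2) * exp d) by (rewrite <- exp_plus; f_equal; unfold d; ring).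
  assert (EF : exp d * exp (- d) = 1) by (rewrite <- exp_plus, <- exp_0; f_equal; ring).
  assert (HF : 1 + - d < exp (- d)) by (apply exp_ineq1; unfold d; lra).
  pose proof (exp_pos (- z2)). pose proof (exp_pos d). pose proof (exp_pos (- d)).
  rewrite Ez.
  assert (z1 * exp d <= z2).
  { assert (z1 <= z2 * exp (- d)) by (unfold d in *; nra).
    assert (z1 * exp d <= z2 * exp (- d) * exp d) by nra. nra. }
  nra.
Qed.

Lemma g_eq SA theta lambda B SM z Vk : 0 < rho z < 1 ->
  g SA theta lambda B SM z Vk =
  INR B * W (pred B) (fun r => nuf SA SM Vk (S r) - nuf SA SM Vk r) (rho z)
  + lambda * INR B * (exp z / (1 - z)) * (1 + theta * SM).
Proof.
  intros Hp. unfold g. f_equal.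
  set (p := rho z).
  transitivity (D B (nuf SA SM Vk) p * / (p * (1 - p))).
  - transitivity (sum_f_R0 (fun r => wt B p r * (nuf SA SM Vk r * (INR r - p * INR B))
        * / (p * (1 - p))) B).
    + apply sum_eq. intros i _. unfold wt, nuf, Rdiv. ring.
    + unfold D. apply sum_scal_r.
  - rewrite D_closed. field. unfold p in *. split; lra.
Qed.

Theorem proposition6 :
  forall (SA theta lambda : R) (B : nat) (Vk SM : R),
    0 < SA -> 0 <= theta -> 0 <= lambda -> (1 <= B)%nat ->
    0 < Vk <= 1 -> 0 <= SM ->
    forall z1 z2 : R, 0 < z1 -> z1 < z2 -> z2 < 1 ->
      g SA theta lambda B SM z1 Vk <= g SA theta lambda B SM z2 Vk.
Proof.
  intros SA theta lambda B Vk SM HA Ht Hl HB HV HM z1 z2 H1 H2 H3.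
  pose proof (rho_bounds z1 ltac:(lra)) as R1.
  pose proof (rho_bounds z2 ltac:(lra)) as R2.
  pose proof (rho_mono z1 z2 H1 H2 ltac:(lra)) as Rm.
  rewrite !g_eq by auto.
  apply Rplus_le_compat.
  - apply Rmult_le_compat_l; [apply pos_INR|].
    apply W_mono; try lra. intros r. apply nuf_conv; lra.
  - pose proof (pos_INR B).
    assert (0 <= lambda * INR B) by nra.
    assert (0 <= 1 + theta * SM) by nra.
    assert (exp z1 / (1 - z1) <= exp z2 / (1 - z2)).
    { pose proof (exp_pos z1). assert (exp z1 < exp z2) by (apply exp_increasing; lra).
      unfold Rdiv. apply Rmult_le_compat; try lra.
      apply Rlt_le, Rinv_0_lt_compat; lra.
      apply Rinv_le_contravar; lra. }
    apply Rmult_le_compat_r; auto. apply Rmult_le_compat_l; auto.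
Qed.
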